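(* Fix a history $H$ with EIP-1559 burning fee $r\ge0$ per unit of size, and consider the Single TFM with split parameter $z\in[0,1]$ and all transactions of the same size $s>0$. Assume users cannot overbid ($c_t\le v_t$), the burning fee is not excessively low (the total size of transactions $t$ in the mempool with $v_t\ge r$ does not exceed the block capacity), and all includers and the block producer follow the indicated allocation rules and add no fake transactions. Then for every user with value $v_t$, the bid $b_t=c_t=\min\{v_t,\ r+\mu^{Cost}_{BP}\}$ is a dominant strategy, irrespective of the user's beliefs.
   Context: Model: in one slot there are users, $m$ includers with distinct orders $1,\dots,m$ (order $1$ best), and one block producer. Each user has a transaction of size $s$ and private value $v_t$ per unit of size. Includers choose inclusion lists (at most $c_{Incl}$ transactions each); the block producer, seeing them, builds a block (at most $c_{block}$ transactions). Each transaction in the block pays burning fee $rs$. Block producer cost $\mu^{Cost}_{BP}\ge0$ and includer cost $\mu^{Cost}_{CM}\ge0$ per unit of size per included user transaction. A user whose transaction is in the block has utility $(v_t-r)s$ minus fees paid; otherwise $0$. Single TFM: the bid is a single number $c_t$. Block producer fee $=\max\{\min\{\mu^{Cost}_{BP}s,\ c_ts-rs\}+\max\{c_ts-rs-\mu^{Cost}_{BP}s,0\}(1-z),\ 0\}$, paid when $t$ is in the block. Committee fee $=\max\{c_ts-rs-\mu^{Cost}_{BP}s,0\}\cdot z$, paid to the smallest-order includer listing $t$, only if $t$ is in the block. Indicated allocation rules. Block producer: among transactions with $c_t\ge r+\mu^{Cost}_{BP}$, include those with highest block producer fee (deterministic tie-breaking) until full. Includer of order $j$: compute the set $S$ the block producer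 would include; discard those with committee fee below $\mu^{Cost}_{CM}s$; sort the rest by committee fee decreasingly (deterministic tie-breaking); includer $j$ takes positions $(j-1)c_{Incl}+1,\dots,jc_{Incl}$. *)

(* Defs.v *)
From mathcomp Require Import all_boot all_order all_algebra.
Set Implicit Arguments. Unset Strict Implicit. Unset Printing Implicit Defensive.
Import Order.TTheory GRing.Theory Num.Theory.
Local Open Scope ring_scope.

(* Single TFM, one slot.  Users form a finite type U; every transaction has
   size s.  A bid profile is c : U -> R (c t = the single bid of user t). *)

Section SingleTFM.
Variables (R : realFieldType) (U : finType).
Variables (r s z muBP muCM : R).
Variables (m cIncl cBlock : nat).      (* #includers, IL capacity, block capacity *)
(* deterministic tie-breaking rules: for each bid profile, an ordering of
   all users (used by the stable sort to break ties) *)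
Variables (tbBP tbCM : (U -> R) -> seq U).

Definition bpFee (c : U -> R) (t : U) : R :=
  Num.max (Num.min (muBP * s) (c t * s - r * s)
           + Num.max (c t * s - r * s - muBP * s) 0 * (1 - z)) 0.

Definition cmFee (c : U -> R) (t : U) : R :=
  Num.max (c t * s - r * s - muBP * s) 0 * z.

Definition block (c : U -> R) : seq U :=
  take cBlock
    (sort (fun a b => bpFee c b <= bpFee c a)
          [seq t <- tbBP c | r + muBP <= c t]).

Definition cmList (c : U -> R) : seq U :=
  sort (fun a b => cmFee c b <= cmFee c a)
       [seq t <- tbCM c | (t \in block c) && (muCM * s <= cmFee c t)].

(* inclusion list of the includer of order j.+1 (j : 'I_m, 0-based):
   positions j*cIncl+1 .. (j+1)*cIncl of cmList *)
Definition inclList (c : U -> R) (j : 'I_m) : seq U :=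
  take cIncl (drop (j * cIncl) (cmList c)).

Definition listed (c : U -> R) (t : U) : bool :=
  [exists j : 'I_m, t \in inclList c j].

Definition utility (vt : R) (c : U -> R) (t : U) : R :=
  if t \in block c then
    (vt - r) * s - bpFee c t - (if listed c t then cmFee c t else 0)
  else 0.

End SingleTFM.

Definition updBid (R : Type) (U : eqType) (c : U -> R) (t : U) (b : R) : U -> R :=
  fun u => if u == t then b else c u.

(* Main.v *)
Require Import Defs.
From mathcomp Require Import all_boot all_order all_algebra.
From mathcomp Require Import lra.
Import Order.TTheory GRing.Theory Num.Theory.
Local Open Scope ring_scope.

Lemma inblock_ge {R : realFieldType} {U : finType}
  {r s z muBP : R} {cBlock : nat}
  {tbBP : (U -> R) -> seq U} {c t} :
  t \in block r s z muBP cBlock tbBP c -> r + muBP <= c t.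
Proof. by rewrite /block => /mem_take; rewrite mem_sort mem_filter => /andP[]. Qed.

Theorem mainTheorem3 (R : realFieldType) (U : finType)
  (r s z muBP muCM : R) (m cIncl cBlock : nat)
  (tbBP tbCM : (U -> R) -> seq U)
  (v : U -> R) :
  0 <= r -> 0 < s -> 0 <= z <= 1 -> 0 <= muBP -> 0 <= muCM ->
  (* tie-breaking orders enumerate each user exactly once *)
  (forall c, perm_eq (tbBP c) (enum U)) ->
  (forall c, perm_eq (tbCM c) (enum U)) ->
  (* burning fee not excessively low *)
  (#|[pred t | r <= v t]|%:R * s <= cBlock%:R * s) ->
  forall (t : U) (c : U -> R),
    (* nobody overbids (this also covers every deviation c t <= v t of t) *)
    (forall u, c u <= v u) ->
    utility r s z muBP muCM m cIncl cBlock tbBP tbCM (v t) c t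
    <= utility r s z muBP muCM m cIncl cBlock tbBP tbCM (v t)
         (updBid c t (Num.min (v t) (r + muBP))) t.
Proof.
move=> r0 s0 /andP[z0 z1] mu0 mc0 pBP pCM hcap t c hc.
set c' := updBid c t _.
have c't : c' t = Num.min (v t) (r + muBP) by rewrite /c' /updBid eqxx.
have c'le : forall u, c' u <= v u.
  move=> u; rewrite /c' /updBid; case: eqP => [->|_]; last exact: hc.
  by rewrite ge_min lexx.
case: (lerP (r + muBP) (v t)) => hv; last first.
  rewrite /utility.
  have -> : (t \in block r s z muBP cBlock tbBP c) = false.
    apply/negP => /inblock_ge h; have := hc t; lra.
  have -> : (t \in block r s z muBP cBlock tbBP c') = false.
    apply/negP => /inblock_ge h; have := c'le t; lra.
  by [].
have c'tE : c' t = r + muBP by rewrite c't; apply/min_idPr.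
have inb : t \in block r s z muBP cBlock tbBP c'.
  rewrite /block take_oversize; last first.
    rewrite size_sort size_filter (permP (pBP c')).
    have : (#|[pred u | (r <= v u)%R]| <= cBlock)%N.
      by rewrite -(ler_nat R) -(ler_pM2r s0).
    apply: leq_trans; rewrite cardE -size_filter size_filter.
    rewrite /enum_mem -enumT size_filter; apply: leq_trans (leq_count_subseq _ (filter_subseq _ _)) _; apply: sub_count => u /= h; rewrite !inE /=; have := c'le u; lra.
  by rewrite mem_sort mem_filter c'tE lexx (perm_mem (pBP c')) mem_enum.
have cmF : cmFee r s z muBP c' t = 0.
  by rewrite /cmFee c'tE; apply/eqP; rewrite mulf_eq0; apply/orP; left;
     apply/eqP/max_idPr; lra.
have bpF : bpFee r s z muBP c' t = muBP * s.
  rewrite /bpFee c'tE.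
  have -> : Num.max ((r + muBP) * s - r * s - muBP * s) 0 = 0 by apply/max_idPr; lra.
  have -> : Num.min (muBP * s) ((r + muBP) * s - r * s) = muBP * s by apply/min_idPl; lra.
  rewrite mul0r addr0; apply/max_idPl; nra.
rewrite /utility inb bpF cmF if_same subr0.
case: ifP => hin; last by nra.
have ge := inblock_ge hin.
have hct := hc t.
have cmge : 0 <= cmFee r s z muBP c t.
  rewrite /cmFee; apply: mulr_ge0 => //; rewrite le_max lexx orbT //.
have bpge : muBP * s <= bpFee r s z muBP c t.
  rewrite /bpFee.
  have -> : Num.max (c t * s - r * s - muBP * s) 0 = c t * s - r * s - muBP * s
    by apply/max_idPl; nra.
  have -> : Num.min (muBP * s) (c t * s - r * s) = muBP * s by apply/min_idPl; nra.
  rewrite le_max; apply/orP; left; rewrite lerDl; apply: mulr_ge0; nra.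
have : 0 <= (if listed r s z muBP muCM m cIncl cBlock tbBP tbCM c t
             then cmFee r s z muBP c t else 0) by case: ifP.
lra.
Qed.
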